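(* Let $\mathbb{K}$ be either $\mathbb{R}$ or $\mathbb{C}$, with all coefficients and solutions in $\mathbb{K}$. Let $D$ be a positive integer and let $1 \le D < q \le \infty$. Let $I$ be an infinite set. For all $i\in I$ and $d \in \{1,\dots,D\}$ let $\mathbf{a}_{i,d} = (a_{i,d,j})_{j=1}^\infty \in \ell^{q/(q-d)}$, and let $b_i \in \mathbb{K}$. For all $i \in I$ consider the multiplicative polynomial equation \[ P_i(\mathbf{x}) = \sum_{k=1}^{D} \sum_{(d_1,\dots,d_k)\in \mathcal{D}_k} (\mathbf{a}_{i,d_1}, \mathbf{x}^{d_1}) (\mathbf{a}_{i,d_2}, \mathbf{x}^{d_2}) \cdots (\mathbf{a}_{i,d_k}, \mathbf{x}^{d_k}) = b_i, \] where $(\mathbf{a}_{i,d},\mathbf{x}^d) = \sum_{j=1}^\infty a_{i,d,j} x_j^d$. Equivalently, $P_i(\mathbf{x}) = \sum_{k=1}^D\sum_{\Delta\in\mathcal{D}_k}\sum_{J\in\mathbb{N}^k} a_{i,\Delta,J}\, x_J^{\Delta}$ with $a_{i,(d_1,\dots,d_k),(j_1,\dots,j_k)} = a_{i,d_1,j_1}\cdots a_{i,d_k,j_k}$ and $x_J^\Delta = x_{j_1}^{d_1}\cdots x_{j_k}^{d_k}$. Let $M>0$. If for every finite subset $S$ of $I$ the finite set of equations $\{P_i(\mathbf{x}) = b_i : i \in S\}$ has a solution $\mathbf{x}_S \in \ell^q$ with $\|\mathbf{x}_S\|_q \le M$, then the infinite set of equations $\{P_i(\mathbf{x}) = b_i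 : i\in I\}$ has a solution $\mathbf{x} \in \ell^q$ with $\|\mathbf{x}\|_q \le M$.
   Context: $\mathbb{N}=\{1,2,3,\dots\}$. For $k\in\{1,\dots,D\}$, $\mathcal{D}_k = \{(d_1,\dots,d_k)\in\mathbb{N}^k : d_1+\cdots+d_k \le D\}$. For $q=\infty$ one sets $q/(q-d)=1$ and $q/d=\infty$. $\ell^p$ ($1\le p<\infty$) denotes sequences with $\|\mathbf{a}\|_p=(\sum_j|a_j|^p)^{1/p}<\infty$ and $\ell^\infty$ bounded sequences with the sup norm; $\mathbf{x}^d = (x_j^d)_{j\ge1}$. For $\mathbf{x}\in\ell^q$ each series $(\mathbf{a}_{i,d},\mathbf{x}^d)$ converges absolutely by Hölder's inequality, since $\mathbf{x}^d\in\ell^{q/d}$ and $(q/(q-d), q/d)$ is a conjugate pair. *)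

(* Defs.v *)
From HB Require Import structures.
From mathcomp Require Import all_boot all_order all_algebra.
From mathcomp Require Import all_classical all_reals all_analysis.
From mathcomp Require Import complex.
Set Implicit Arguments. Unset Strict Implicit. Unset Printing Implicit Defensive.
Import Order.TTheory GRing.Theory Num.Theory.
Import numFieldNormedType.Exports.
Local Open Scope classical_set_scope.
Local Open Scope ring_scope.

Section Lp.
Variables (R : realType) (K : numFieldType) (nrm : K -> R).

(* Membership in l^p for p in [1, +oo] (p : \bar R). Indices j : nat
   (0-based, i.e. j = 0 corresponds to the paper's index 1). *)
Definition lp_mem (p : \bar R) (x : nat -> K) : Prop :=
  match p with
  | r%:E => (\sum_(0 <= j <oo) ((nrm (x j)) `^ r)%:E < +oo)%E
  | +oo%E => exists B : R, forall j, nrm (x j) <= B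
  | -oo%E => False
  end.

Definition lp_norm (p : \bar R) (x : nat -> K) : \bar R :=
  match p with
  | r%:E => ((\sum_(0 <= j <oo) ((nrm (x j)) `^ r)%:E) `^ r^-1)%E
  | +oo%E => ereal_sup [set ((nrm (x j))%:E) | j in [set: nat]]
  | -oo%E => -oo%E
  end.

Definition dual_exp (q : \bar R) (d : nat) : \bar R :=
  match q with
  | r%:E => (r / (r - d%:R))%:E
  | +oo%E => 1%E
  | -oo%E => -oo%E
  end.

Definition pairing (a : nat -> K) (d : nat) (x : nat -> K) : K :=
  limn (series (fun j => a j * x j ^+ d)).

(* P(x) = sum_{k=1}^D sum_{(d_1..d_k) in D_k} prod_l (a_{d_l}, x^{d_l}),
   where a d is the coefficient sequence a_{i,d}, and D_k is the set of
   k-tuples of positive integers with sum <= D (each d_l lies in 1..D). *)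
Definition Ppoly (D : nat) (a : nat -> nat -> K) (x : nat -> K) : K :=
  \sum_(k < D)
    \sum_(t : {ffun 'I_k.+1 -> 'I_D.+1} |
          [forall l, 0 < (t l : nat)]%N && (\sum_(l < k.+1) (t l : nat) <= D)%N)
      \prod_(l < k.+1) pairing (a (t l)) (t l) x.

Definition compactness_statement : Prop :=
  forall (D : nat) (q : \bar R) (I : Type)
         (a : I -> nat -> nat -> K) (b : I -> K) (M : R),
    (0 < D)%N ->
    (D%:R%:E < q)%E ->
    ~ finite_set [set: I] ->
    (forall i d, (1 <= d <= D)%N -> lp_mem (dual_exp q d) (a i d)) ->
    0 < M ->
    (forall S : set I, finite_set S ->
       exists x : nat -> K,
         [/\ lp_mem q x, (lp_norm q x <= M%:E)%E &
             forall i, S i -> Ppoly D (a i) x = b i]) ->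
    exists x : nat -> K,
      [/\ lp_mem q x, (lp_norm q x <= M%:E)%E &
          forall i, Ppoly D (a i) x = b i].

End Lp.

(* Main.v *)
Require Import Defs.
From HB Require Import structures.
From mathcomp Require Import all_boot all_order all_algebra.
From mathcomp Require Import all_classical all_reals all_analysis.
From mathcomp Require Import complex.
From mathcomp Require Import ring lra.
Import Order.TTheory GRing.Theory Num.Theory.
Import numFieldNormedType.Exports.
Local Open Scope classical_set_scope.
Local Open Scope ring_scope.
Set Implicit Arguments. Unset Strict Implicit. Unset Printing Implicit Defensive.

Section RLemmas.
Variable R : realType.

Lemma PB (f : nat -> R) (B : R) : (forall j, 0 <= f j) ->
  (forall n, \sum_(0 <= j < n) f j <= B) ->
  (\sum_(0 <= j <oo) (f j)%:E <= B%:E)%E.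
Proof.
move=> f0 hB; apply: lime_le.
  by apply: is_cvg_nneseries => n _ _; rewrite lee_fin.
by apply: nearW => n; rewrite sumEFin lee_fin.
Qed.

Lemma partial_le (f : nat -> R) : (forall j, 0 <= f j) -> forall n,
  ((\sum_(0 <= j < n) f j)%:E <= \sum_(0 <= j <oo) (f j)%:E)%E.
Proof.
move=> f0 n; rewrite -sumEFin; apply: nneseries_lim_ge => k _ _.
by rewrite lee_fin.
Qed.

Lemma sub_le (f : nat -> R) N m : (forall j, 0 <= f j) ->
  \sum_(N <= j < m) f j <= \sum_(0 <= j < m) f j.
Proof.
move=> f0; case: (leqP N m) => Nm.
  by rewrite (big_cat_nat (leq0n N) Nm) /= lerDr sumr_ge0.
by rewrite big_geq ?sumr_ge0 // ltnW.
Qed.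

Lemma TL (f : nat -> R) : (forall j, 0 <= f j) ->
  (\sum_(0 <= j <oo) (f j)%:E < +oo)%E ->
  forall e, 0 < e -> exists N, forall m, \sum_(N <= j < m) f j <= e.
Proof.
move=> f0 fin e e0.
have s0 : (0 <= \sum_(0 <= j <oo) (f j)%:E)%E.
  by apply: nneseries_ge0 => n _ _; rewrite lee_fin.
have sfin : (\sum_(0 <= j <oo) (f j)%:E)%E \is a fin_num by rewrite ge0_fin_numE.
set L := fine (\sum_(0 <= j <oo) (f j)%:E)%E.
have sE : (\sum_(0 <= j <oo) (f j)%:E)%E = L%:E by rewrite fineK.
have hle n : \sum_(0 <= j < n) f j <= L by rewrite -lee_fin -sE partial_le.
have [N hN] : exists N, L - e < \sum_(0 <= j < N) f j.
  case: (pselect (exists N, L - e < \sum_(0 <= j < N) f j)) => // hn.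
  exfalso.
  have : (\sum_(0 <= j <oo) (f j)%:E <= (L - e)%:E)%E.
    apply: PB => // n; rewrite leNgt; apply/negP => h; apply: hn; exists n.
    exact: h.
  rewrite sE lee_fin; lra.
exists N => m; case: (leqP N m) => Nm.
  have := hle m; rewrite (big_cat_nat (leq0n N) Nm) /=; lra.
by rewrite big_geq ?ltW // ltnW.
Qed.

Lemma split_ineq (r : R) (d : nat) (u w mu : R) : (0 < d)%N -> d%:R < r ->
  0 <= u -> 0 <= w -> 0 < mu ->
  u * w ^+ d <= mu * w `^ r +
     expR (- (d%:R / (r - d%:R)) * ln mu) * u `^ (r / (r - d%:R)).
Proof.
move=> d0 dr u0 w0 mu0.
have rd : 0 < r - d%:R by rewrite subr_gt0.
have hR : 0 <= mu * w `^ r by rewrite mulr_ge0 ?powR_ge0 // ltW.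
have hC : 0 <= expR (- (d%:R / (r - d%:R)) * ln mu) * u `^ (r / (r - d%:R)).
  by rewrite mulr_ge0 // ?expR_ge0 ?powR_ge0.
case: (eqVneq u 0) => [->|un0]; first by rewrite mul0r addr_ge0.
case: (eqVneq w 0) => [wE|wn0].
  by rewrite wE expr0n (gtn_eqF d0) /= mulr0 addr_ge0 // mulr_ge0 ?powR_ge0 // ltW.
have upos : 0 < u by rewrite lt_neqAle eq_sym un0 u0.
have wpos : 0 < w by rewrite lt_neqAle eq_sym wn0 w0.
set lu := ln u; set lw := ln w; set lm := ln mu.
have uE : u = expR lu by rewrite /lu lnK // posrE.
have wdE : w ^+ d = expR (d%:R * lw) by rewrite expRM_natl /lw lnK // posrE.
have wrE : w `^ r = expR (r * lw) by rewrite /powR (negbTE wn0).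
have upE : u `^ (r / (r - d%:R)) = expR (r / (r - d%:R) * lu).
  by rewrite /powR (negbTE un0).
have muE : mu = expR lm by rewrite /lm lnK // posrE.
rewrite {1}uE wdE -expRD.
case: (lerP lu (lm + (r - d%:R) * lw)) => h.
  apply: le_trans (_ : _ <= mu * w `^ r) _; last by rewrite lerDl.
  rewrite muE wrE -expRD ler_expR; rewrite mulrBl in h; lra.
apply: le_trans (_ : _ <= expR (- (d%:R / (r - d%:R)) * ln mu) *
  u `^ (r / (r - d%:R))) _; last by rewrite lerDr.
rewrite upE -expRD ler_expR -/lm.
have -> : - (d%:R / (r - d%:R)) * lm + r / (r - d%:R) * lu =
   (r * lu - d%:R * lm) / (r - d%:R) by field; rewrite gt_eqF.
rewrite ler_pdivlMr //.
have d0' : 0 < d%:R :> R by rewrite ltr0n.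
have h1 : (r - d%:R) * lw <= lu - lm by lra.
have h2 : d%:R * ((r - d%:R) * lw) <= d%:R * (lu - lm) by rewrite ler_pM2l.
have e1 : (lu + d%:R * lw) * (r - d%:R) = lu * (r - d%:R) + d%:R * ((r - d%:R) * lw)
  by ring.
have e2 : r * lu = lu * (r - d%:R) + d%:R * lu by ring.
rewrite e1 e2; rewrite mulrBr in h2; lra.
Qed.

End RLemmas.

Section RLemmas2.
Variable R : realType.

Lemma powR_cvg T (F : set_system T) {FF : ProperFilter F} (u : T -> R) (w r : R) :
  0 < r -> (forall t, 0 <= u t) -> u t @[t --> F] --> w ->
  (u t `^ r) @[t --> F] --> w `^ r.
Proof.
move=> r0 u0 uw.
have w0 : 0 <= w.
  have hn : F [set t | 0 <= u t] by apply: nearW.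
  have := @closed_cvg T R F FF u [set x | 0 <= x] (@closed_ge R 0) hn w uw.
  exact.
case: (eqVneq w 0) => [w0E|wn0].
  rewrite w0E powR0 ?gt_eqF //; apply/cvgrPdist_lt => e e0.
  have d0 : 0 < e `^ r^-1 by rewrite powR_gt0.
  move/cvgrPdist_lt: uw => /(_ _ d0); rewrite w0E.
  apply: filterS => t /=; rewrite !sub0r !normrN !ger0_norm ?powR_ge0 // => h.
  have h2 : u t `^ r < (e `^ r^-1) `^ r.
    by apply: gt0_ltr_powR => //; rewrite nnegrE ?powR_ge0.
  by rewrite -powRrM mulVf ?gt_eqF // powRr1 // ltW in h2.
have wpos : 0 < w by rewrite lt_neqAle eq_sym wn0 w0.
have ev : F [set t | 0 < u t].
  move/cvgrPdist_lt: uw => /(_ _ wpos); apply: filterS => t /=.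
  by rewrite ltr_norml => /andP [h1 h2]; lra.
have -> : w `^ r = expR (r * ln w) by rewrite /powR (negbTE wn0).
apply: cvg_trans (near_eq_cvg _) _.
  by apply: filterS ev => t /= ut; rewrite /powR gt_eqF.
apply: (@continuous_cvg _ _ _ _ _ (fun t => r * ln (u t)) expR).
  exact: continuous_expR.
apply: cvgMl_tmp.
exact: (@continuous_cvg _ _ _ _ _ u (@ln R) w (continuous_ln wpos) uw).
Qed.

End RLemmas2.
Section Gen.
Variables (R : realType) (K : numFieldType) (nrm : K -> R).
Hypothesis nrm_ge0 : forall x, 0 <= nrm x.
Hypothesis nrm_eq0 : forall x, nrm x = 0 -> x = 0.
Hypothesis nrmD : forall x y, nrm (x + y) <= nrm x + nrm y.
Hypothesis nrmM : forall x y, nrm (x * y) = nrm x * nrm y.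
Hypothesis nrmN : forall x, nrm (- x) = nrm x.
Hypothesis nrm0 : nrm 0 = 0.
Hypothesis nrm1 : nrm 1 = 1.

Lemma nrmB_sym x y : nrm (x - y) = nrm (y - x).
Proof. by rewrite -nrmN opprB. Qed.

Lemma nrmB x y : nrm (x - y) <= nrm x + nrm y.
Proof. by rewrite (le_trans (nrmD _ _)) // nrmN. Qed.

Lemma nrm_tri x y z : nrm (x - z) <= nrm (x - y) + nrm (y - z).
Proof. by rewrite (le_trans _ (nrmD _ _)) // addrA subrK. Qed.

Lemma nrm_rev x y : `| nrm x - nrm y | <= nrm (x - y).
Proof.
have h1 := nrm_tri x y 0; have h2 := nrm_tri y x 0.
rewrite !subr0 in h1 h2; rewrite (nrmB_sym y x) in h2.
rewrite ler_norml; apply/andP; split; lra.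
Qed.

Lemma nrmX x n : nrm (x ^+ n) = nrm x ^+ n.
Proof. by elim: n => [|n IH]; rewrite ?expr0 ?nrm1 // !exprS nrmM IH. Qed.

Lemma nrm_sum (I0 : Type) (r : seq I0) (P : pred I0) (F : I0 -> K) :
  nrm (\sum_(i <- r | P i) F i) <= \sum_(i <- r | P i) nrm (F i).
Proof.
elim: r => [|h r IH]; first by rewrite !big_nil nrm0.
rewrite !big_cons; case: (P h) => //.
by rewrite (le_trans (nrmD _ _)) // lerD2l.
Qed.

Section Conv.
Variables (T : Type) (U : set_system T).
Context {FU : Filter U}.

Definition nconv (f : T -> K) (L : K) :=
  forall e : R, 0 < e -> U [set t | nrm (f t - L) < e].

Lemma nconv_ext f g L : (forall t, f t = g t) -> nconv f L -> nconv g L.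
Proof. by move=> fg fL e e0; apply: filterS (fL e e0) => t /=; rewrite fg. Qed.

Lemma nconv_const c : nconv (fun _ => c) c.
Proof. by move=> e e0; apply: filterS filterT => t _ /=; rewrite subrr nrm0. Qed.

Lemma nconv_add f g A B : nconv f A -> nconv g B ->
  nconv (fun t => f t + g t) (A + B).
Proof.
move=> fA gB e e0.
have e20 : 0 < e / 2 by rewrite divr_gt0.
apply: filterS (filterI (fA _ e20) (gB _ e20)) => t [/= h1 h2].
rewrite opprD addrACA (le_lt_trans (nrmD _ _)) //.
by rewrite (splitr e) ltrD.
Qed.

Lemma nconv_mul f g A B : nconv f A -> nconv g B ->
  nconv (fun t => f t * g t) (A * B).
Proof.
move=> fA gB e e0.
set c := nrm A + nrm B + 1.
have c0 : 0 < c by rewrite /c ltr_wpDl // addr_ge0.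
set d := Num.min 1 (e / (2 * c)).
have d0 : 0 < d by rewrite lt_min ltr01 divr_gt0 // mulr_gt0.
have d1 : d <= 1 by rewrite ge_min lexx.
have dc : d * c <= e / 2.
  by rewrite -ler_pdivlMr // -mulrA -invfM ge_min lexx orbT.
apply: filterS (filterI (fA _ d0) (gB _ d0)) => t [/= h1 h2].
have -> : f t * g t - A * B = f t * (g t - B) + (f t - A) * B.
  by rewrite mulrBr mulrBl addrA subrK.
rewrite (le_lt_trans (nrmD _ _)) // !nrmM.
have hf : nrm (f t) <= nrm A + 1.
  rewrite (le_trans (_ : _ <= nrm (f t - A) + nrm (A - 0))) //.
    by rewrite (le_trans _ (nrm_tri _ A _)) // subr0.
  by rewrite subr0 addrC lerD2l (le_trans (ltW h1)).
apply: (@le_lt_trans _ _ ((nrm A + 1) * d + d * nrm B)).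
  rewrite lerD //; first by rewrite ler_pM // ltW.
  by rewrite ler_wpM2r // ltW.
have -> : (nrm A + 1) * d + d * nrm B = d * c by rewrite /c; ring.
by rewrite (le_lt_trans dc) // ltr_pdivrMr // ltr_pMr // ltr1n.
Qed.

Lemma nconv_sum (I0 : Type) (r : seq I0) (P : pred I0) (F : I0 -> T -> K)
  (L : I0 -> K) : (forall i, P i -> nconv (F i) (L i)) ->
  nconv (fun t => \sum_(i <- r | P i) F i t) (\sum_(i <- r | P i) L i).
Proof.
move=> FL; elim: r => [|h r IH].
  by apply: nconv_ext (nconv_const _) => t; rewrite !big_nil.
rewrite big_cons; case Ph: (P h).
  apply: nconv_ext (nconv_add (FL _ Ph) IH) => t.
  by rewrite big_cons Ph.
by apply: nconv_ext IH => t; rewrite big_cons Ph.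
Qed.

Lemma nconv_prod (I0 : Type) (r : seq I0) (P : pred I0) (F : I0 -> T -> K)
  (L : I0 -> K) : (forall i, P i -> nconv (F i) (L i)) ->
  nconv (fun t => \prod_(i <- r | P i) F i t) (\prod_(i <- r | P i) L i).
Proof.
move=> FL; elim: r => [|h r IH].
  by apply: nconv_ext (nconv_const _) => t; rewrite !big_nil.
rewrite big_cons; case Ph: (P h).
  apply: nconv_ext (nconv_mul (FL _ Ph) IH) => t.
  by rewrite big_cons Ph.
by apply: nconv_ext IH => t; rewrite big_cons Ph.
Qed.

Lemma nconv_exp f A n : nconv f A -> nconv (fun t => f t ^+ n) (A ^+ n).
Proof.
move=> fA; elim: n => [|n IH].
  by apply: nconv_ext (nconv_const _) => t; rewrite !expr0.
by rewrite exprS; apply: nconv_ext (nconv_mul fA IH) => t; rewrite exprS.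
Qed.

End Conv.

Lemma nconv_eq T (U : set_system T) {FU : ProperFilter U} f L b :
  nconv U f L -> U [set t | f t = b] -> b = L.
Proof.
move=> fL fb; apply/eqP; rewrite -subr_eq0; apply/eqP/nrm_eq0.
apply/eqP; rewrite eq_le nrm_ge0 andbT; apply/ler_addgt0Pr => e e0.
have [t [/= h1 h2]] := filter_ex (filterI (fL _ e0) fb).
by rewrite add0r -h2 ltW.
Qed.

Hypothesis ncompl : forall u : nat -> K,
  (forall e, 0 < e -> exists N, forall n m, (N <= n)%N -> (N <= m)%N ->
     nrm (u n - u m) <= e) ->
  forall e, 0 < e -> exists N, forall n, (N <= n)%N -> nrm (u n - limn u) <= e.

Hypothesis ncpt : forall (T : Type) (U : set_system T), UltraFilter U ->
  forall (f : T -> K) (M : R), U [set t | nrm (f t) <= M] ->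
  exists L, nconv U f L.

Lemma pairing_approx (a : nat -> K) (d : nat) (x : nat -> K) (N : nat) (e : R) :
  (forall m, \sum_(N <= j < m) nrm (a j) * nrm (x j) ^+ d <= e) ->
  (forall e', 0 < e' -> exists N', forall m,
      \sum_(N' <= j < m) nrm (a j) * nrm (x j) ^+ d <= e') ->
  nrm (pairing a d x - \sum_(0 <= j < N) a j * x j ^+ d) <= e.
Proof.
move=> hN htail.
set u := series (fun j => a j * x j ^+ d).
have uE n : u n = \sum_(0 <= j < n) a j * x j ^+ d by [].
have diff n m : (n <= m)%N -> u m - u n = \sum_(n <= j < m) a j * x j ^+ d.
  by move=> nm; rewrite !uE (big_cat_nat (leq0n n) nm) /= addrAC subrr add0r.
have bnd n m : (n <= m)%N ->
    nrm (u m - u n) <= \sum_(n <= j < m) nrm (a j) * nrm (x j) ^+ d.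
  move=> nm; rewrite diff // (le_trans (nrm_sum _ _ _)) //.
  by apply: ler_sum => j _; rewrite nrmM nrmX.
have cauchy : forall e', 0 < e' -> exists N0, forall n m, (N0 <= n)%N ->
    (N0 <= m)%N -> nrm (u n - u m) <= e'.
  move=> e' e'0; have e'20 : 0 < e' / 2 by rewrite divr_gt0.
  have [N' hN'] := htail _ e'20; exists N' => n m hn hm.
  rewrite (le_trans (nrm_tri _ (u N') _)) // (nrmB_sym (u N')) (splitr e').
  by apply: lerD; apply: le_trans (bnd _ _ _) _.
have -> : pairing a d x = limn u by [].
rewrite -uE; apply/ler_addgt0Pr => eta eta0.
have [N'' hN''] := ncompl cauchy eta0.
set n := maxn N N''.
have h1 : nrm (u n - u N) <= e by apply: le_trans (bnd _ _ _) (hN _); rewrite leq_maxl.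
have h2 : nrm (u n - limn u) <= eta by apply: hN''; rewrite leq_maxr.
have h3 := nrm_tri (limn u) (u n) (u N).
rewrite (nrmB_sym (limn u) (u n)) in h3.
lra.
Qed.

Lemma core (D : nat) (I : Type) (a : I -> nat -> nat -> K) (b : I -> K) (M : R)
  (Ballp : (nat -> K) -> Prop) :
 (forall x, Ballp x -> forall j, nrm (x j) <= M) ->
 (forall (T : Type) (U : set_system T), ProperFilter U ->
    forall (g : T -> nat -> K) (x : nat -> K), U [set t | Ballp (g t)] ->
    (forall j, nconv U (fun t => g t j) (x j)) -> Ballp x) ->
 (forall i d, (0 < d <= D)%N -> forall e, 0 < e -> exists N, forall x, Ballp x ->
    forall m, \sum_(N <= j < m) nrm (a i d j) * nrm (x j) ^+ d <= e) ->
 (forall S : set I, finite_set S ->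
    exists x, Ballp x /\ forall i, S i -> Ppoly D (a i) x = b i) ->
 exists x, Ballp x /\ forall i, Ppoly D (a i) x = b i.
Proof.
move=> B1 B2 B3 hS.
pose G := fun A : set (set I) => exists S0, finite_set S0 /\
  forall S, finite_set S -> S0 `<=` S -> A S.
have GF : ProperFilter G.
  apply: Build_ProperFilter_ex.
    by move=> A [S0 [fS0 h]]; exists S0; exact: h.
  split.
  - by exists set0; split; [exact: finite_set0 | by []].
  - move=> A B [S0 [f0 h0]] [S1 [f1 h1]]; exists (S0 `|` S1); split.
      by rewrite finite_setU.
    move=> S fS sub; split; [apply: h0 | apply: h1] => // z ?; apply: sub;
      [left|right] => //.
  - by move=> A B AB [S0 [f0 h0]]; exists S0; split => // S fS sub; exact/AB/h0.
have [U [UU GU]] := ultraFilterLemma GF.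
have [xs xsP] : exists xs : set I -> nat -> K, forall S, finite_set S ->
    Ballp (xs S) /\ forall i, S i -> Ppoly D (a i) (xs S) = b i.
  have h : forall S : set I, exists x : nat -> K, finite_set S ->
      Ballp x /\ forall i, S i -> Ppoly D (a i) x = b i.
    move=> S; case: (pselect (finite_set S)) => fS.
      by have [x hx] := hS S fS; exists x.
    by exists (fun=> 0).
  by case: (choice h) => f hf; exists f.
have Ufin : U [set S | finite_set S].
  by apply: GU; exists set0; split => //; exact: finite_set0.
have UB : U [set S | Ballp (xs S)] by apply: filterS Ufin => S /xsP [].
have [x xP] : exists x : nat -> K, forall j, nconv U (fun S => xs S j) (x j).
  have h : forall j, exists L, nconv U (fun S => xs S j) L.
    by move=> j; apply: (ncpt UU (M:=M)); apply: filterS UB => S /B1 /(_ j).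
  by case: (choice h) => f hf; exists f.
have Bx : Ballp x by apply: (B2 _ U _ xs x UB xP).
exists x; split => // i.
have hpair : forall d, (0 < d <= D)%N ->
    nconv U (fun S => pairing (a i d) d (xs S)) (pairing (a i d) d x).
  move=> d dD e e0.
  have e30 : 0 < e / 3 by rewrite divr_gt0.
  have [N hN] := B3 i d dD _ e30.
  have tail y : Ballp y -> forall e', 0 < e' -> exists N', forall m,
      \sum_(N' <= j < m) nrm (a i d j) * nrm (y j) ^+ d <= e'.
    by move=> By e' e'0; have [N' hN'] := B3 i d dD _ e'0; exists N'; apply: hN'.
  have hps : nconv U (fun S => \sum_(0 <= j < N) a i d j * xs S j ^+ d)
      (\sum_(0 <= j < N) a i d j * x j ^+ d).
    apply: nconv_sum => j _; apply: nconv_mul; first exact: nconv_const.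
    exact: nconv_exp.
  apply: filterS (filterI UB (hps _ e30)) => S [/= BS hS'].
  have h1 := pairing_approx (hN _ BS) (tail _ BS).
  have h2 := pairing_approx (hN _ Bx) (tail _ Bx).
  move: h1 h2 hS'.
  set P1 := pairing _ _ (xs S); set P2 := pairing _ _ x.
  set s1 := \sum_(0 <= j < N) _; set s2 := \sum_(0 <= j < N) _.
  move=> h1 h2 h3.
  have -> : P1 - P2 = (P1 - s1) + (s1 - s2) - (P2 - s2) by ring.
  have h4 := nrmB (P1 - s1 + (s1 - s2)) (P2 - s2).
  have h5 := nrmD (P1 - s1) (s1 - s2).
  have e3 : e = e / 3 + e / 3 + e / 3 by field.
  lra.
have hP : nconv U (fun S => Ppoly D (a i) (xs S)) (Ppoly D (a i) x).
  rewrite /Ppoly; apply: nconv_sum => k _; apply: nconv_sum => t /andP [/forallP t0 _].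
  apply: nconv_prod => l _; apply: hpair; rewrite t0 /= -ltnS; exact: ltn_ord.
have Ub : U [set S | Ppoly D (a i) (xs S) = b i].
  apply: GU; exists [set i]; split; first exact: finite_set1.
  by move=> S fS sub; apply: (xsP S fS).2; apply: sub.
by rewrite (nconv_eq hP Ub).
Qed.


Lemma ball_inf (x : nat -> K) (M : R) :
  lp_mem nrm +oo%E x /\ (lp_norm nrm +oo%E x <= M%:E)%E <->
  (forall j, nrm (x j) <= M).
Proof.
split.
  case=> _ /= /ereal_supP h j; rewrite -lee_fin; apply: h; by exists j.
move=> h; split; first by exists M.
by apply/ereal_supP => _ [j _ <-]; rewrite lee_fin.
Qed.

Lemma B2_inf (M : R) (T : Type) (U : set_system T) {FU : ProperFilter U}
  (g : T -> nat -> K) (x : nat -> K) :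
  U [set t | forall j, nrm (g t j) <= M] ->
  (forall j, nconv U (fun t => g t j) (x j)) -> forall j, nrm (x j) <= M.
Proof.
move=> hb hx j; apply/ler_addgt0Pr => e e0.
have [t [/= h1 h2]] := filter_ex (filterI hb (hx j _ e0)).
have h3 := nrm_tri (x j) (g t j) 0; rewrite !subr0 nrmB_sym in h3.
have := h1 j; lra.
Qed.

Lemma nexp_le (u v : R) n : 0 <= u -> u <= v -> u ^+ n <= v ^+ n.
Proof.
move=> u0 uv; apply: lerXn2r => //; rewrite nnegrE //; exact: le_trans uv.
Qed.

Lemma B3_inf (a : nat -> K) d (M : R) : 0 < M -> lp_mem nrm 1%:E a ->
  forall e, 0 < e -> exists N, forall x, (forall j, nrm (x j) <= M) ->
  forall m, \sum_(N <= j < m) nrm (a j) * nrm (x j) ^+ d <= e.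
Proof.
move=> M0 ha e e0.
have Mp : 0 < M ^+ d by rewrite exprn_gt0.
have [N hN] := TL (fun j => powR_ge0 (nrm (a j)) 1) ha (divr_gt0 e0 Mp).
exists N => x hx m.
apply: le_trans (_ : _ <= \sum_(N <= j < m) nrm (a j) `^ 1 * M ^+ d) _.
  apply: ler_sum => j _; rewrite powRr1 //; apply: ler_wpM2l => //.
  exact: nexp_le.
by rewrite -mulr_suml -ler_pdivlMr.
Qed.

Definition ballr (r M : R) (x : nat -> K) :=
  forall N, \sum_(0 <= j < N) nrm (x j) `^ r <= M `^ r.

Lemma ball_r (r M : R) (x : nat -> K) : 0 < r -> 0 < M ->
  lp_mem nrm r%:E x /\ (lp_norm nrm r%:E x <= M%:E)%E <-> ballr r M x.
Proof.
move=> r0 M0; rewrite /lp_mem /lp_norm.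
set s := (\sum_(0 <= j <oo) ((nrm (x j)) `^ r)%:E)%E.
have s0 : (0 <= s)%E by apply: nneseries_ge0 => n _ _; rewrite lee_fin powR_ge0.
split.
  case=> hm hn N.
  have sfin : s \is a fin_num by rewrite ge0_fin_numE.
  set L := fine s; have sE : s = L%:E by rewrite fineK.
  have L0 : 0 <= L by rewrite -lee_fin -sE.
  rewrite sE poweR_EFin lee_fin in hn.
  have hle : \sum_(0 <= j < N) nrm (x j) `^ r <= L.
    by rewrite -lee_fin -sE; apply: partial_le => j; exact: powR_ge0.
  apply: le_trans hle _.
  have -> : L = (L `^ r^-1) `^ r by rewrite -powRrM mulVf ?gt_eqF // powRr1.
  by apply: ge0_ler_powR => //; rewrite ?nnegrE ?powR_ge0 // ltW.
move=> hb.
have hs : (s <= (M `^ r)%:E)%E by apply: PB => // j; exact: powR_ge0.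
have slt : (s < +oo)%E by apply: le_lt_trans hs (ltry _).
split => //.
have sfin : s \is a fin_num by rewrite ge0_fin_numE.
set L := fine s; have sE : s = L%:E by rewrite fineK.
have L0 : 0 <= L by rewrite -lee_fin -sE.
rewrite sE poweR_EFin lee_fin; rewrite sE lee_fin in hs.
have -> : M = (M `^ r) `^ r^-1 by rewrite -powRrM mulfV ?gt_eqF // powRr1 // ltW.
apply: ge0_ler_powR => //; rewrite ?invr_ge0 ?ltW // nnegrE //; exact: powR_ge0.
Qed.

Lemma B1_r (r M : R) (x : nat -> K) : 0 < r -> 0 < M -> ballr r M x ->
  forall j, nrm (x j) <= M.
Proof.
move=> r0 M0 hb j; have := hb j.+1; rewrite big_nat_recr //= => h.
have hj : nrm (x j) `^ r <= M `^ r.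
  apply: le_trans h; rewrite lerDr sumr_ge0 // => i _; exact: powR_ge0.
rewrite leNgt; apply/negP => hM.
have : M `^ r < nrm (x j) `^ r.
  by apply: gt0_ltr_powR => //; rewrite nnegrE ?nrm_ge0 // ltW.
by rewrite ltNge hj.
Qed.

Lemma B2_r (r M : R) (T : Type) (U : set_system T) {FU : ProperFilter U}
  (g : T -> nat -> K) (x : nat -> K) : 0 < r ->
  U [set t | ballr r M (g t)] ->
  (forall j, nconv U (fun t => g t j) (x j)) -> ballr r M x.
Proof.
move=> r0 hb hx N.
have hc : forall j, (nrm (g t j) `^ r) @[t --> U] --> nrm (x j) `^ r.
  move=> j; apply: powR_cvg => //.
  apply/cvgrPdist_lt => e e0; apply: filterS (hx j _ e0) => t /= h.
  by rewrite (le_lt_trans (nrm_rev _ _)) // nrmB_sym.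
have hs : (\sum_(0 <= j < N) nrm (g t j) `^ r) @[t --> U] -->
    \sum_(0 <= j < N) nrm (x j) `^ r.
  elim: N => [|N IH].
    have -> : (fun t => \sum_(0 <= j < 0) nrm (g t j) `^ r) = (fun=> 0).
      by apply: funext => t; rewrite big_geq.
    rewrite big_geq //; exact: cvg_cst.
  have -> : (fun t => \sum_(0 <= j < N.+1) nrm (g t j) `^ r) =
     (fun t => \sum_(0 <= j < N) nrm (g t j) `^ r) + (fun t => nrm (g t N) `^ r).
    by apply: funext => t; rewrite big_nat_recr.
  rewrite big_nat_recr //; exact: cvgD.
have hn : U [set t | \sum_(0 <= j < N) nrm (g t j) `^ r <= M `^ r].
  by apply: filterS hb => t; apply.
exact: (closed_cvg _ (@closed_le R (M `^ r)) hn _ hs).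
Qed.

Lemma B3_r (r M : R) (a : nat -> K) d : (0 < d)%N -> d%:R < r -> 0 < M ->
  lp_mem nrm (r / (r - d%:R))%:E a ->
  forall e, 0 < e -> exists N, forall x, ballr r M x ->
  forall m, \sum_(N <= j < m) nrm (a j) * nrm (x j) ^+ d <= e.
Proof.
move=> d0 dr M0 ha e e0.
set p := r / (r - d%:R).
have Mr0 : 0 < M `^ r by rewrite powR_gt0.
set mu := e / (2 * M `^ r).
have mu0 : 0 < mu by rewrite divr_gt0 // mulr_gt0.
set C := expR (- (d%:R / (r - d%:R)) * ln mu).
have C0 : 0 < C by rewrite expR_gt0.
have [N hN] := TL (fun j => powR_ge0 (nrm (a j)) p) ha
  (divr_gt0 e0 (mulr_gt0 (ltr0n _ 2) C0)).
exists N => x hx m.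
apply: le_trans (_ : _ <= \sum_(N <= j < m)
   (mu * nrm (x j) `^ r + C * nrm (a j) `^ p)) _.
  by apply: ler_sum => j _; apply: split_ineq => //; apply: ltW.
rewrite big_split /= -!mulr_sumr.
have h1 : \sum_(N <= j < m) nrm (x j) `^ r <= M `^ r.
  apply: le_trans (sub_le _ _ _) (hx m) => j; exact: powR_ge0.
have h2 := hN m.
have h3 : mu * \sum_(N <= j < m) nrm (x j) `^ r <= e / 2.
  apply: le_trans (ler_wpM2l (ltW mu0) h1) _.
  by rewrite /mu le_eqVlt; apply/orP; left; apply/eqP; field; rewrite gt_eqF.
have h4 : C * \sum_(N <= j < m) nrm (a j) `^ p <= e / 2.
  apply: le_trans (ler_wpM2l (ltW C0) h2) _.
  by rewrite le_eqVlt; apply/orP; left; apply/eqP; field; rewrite gt_eqF.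
lra.
Qed.

Lemma natr_lt (d D : nat) (r : R) : (d <= D)%N -> D%:R < r -> d%:R < r.
Proof. by move=> h; apply: le_lt_trans; rewrite ler_nat. Qed.

Theorem gen_stmt : compactness_statement nrm.
Proof.
move=> D q I a b M D0 Dq Iinf ha M0 hS.
have D1 : (1 : R) <= D%:R by rewrite ler1n.
case: q Dq ha hS => [r| |] Dq ha hS; last by [].
  rewrite lte_fin in Dq.
  have r0 : 0 < r by lra.
  have [x [Bx Px]] := @core D I a b M (ballr r M) (fun x => @B1_r r M x r0 M0)
     (fun T U FU g x hb hx => @B2_r r M T U FU g x r0 hb hx)
     (fun i d dD => @B3_r r M (a i d) d (proj1 (andP dD))
         (natr_lt (proj2 (andP dD)) Dq) M0 (ha i d dD))
     (fun S fS => let: ex_intro x (And3 h1 h2 h3) := hS S fS in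
        ex_intro _ x (conj (proj1 (@ball_r r M x r0 M0) (conj h1 h2)) h3)).
  by exists x; have [h1 h2] := proj2 (@ball_r r M x r0 M0) Bx; split.
have [x [Bx Px]] := @core D I a b M (fun x => forall j, nrm (x j) <= M)
   (fun x h => h)
   (fun T U FU g x hb hx => @B2_inf M T U FU g x hb hx)
   (fun i d dD => @B3_inf (a i d) d M M0 (ha i d dD))
   (fun S fS => let: ex_intro x (And3 h1 h2 h3) := hS S fS in
      ex_intro _ x (conj (proj1 (@ball_inf x M) (conj h1 h2)) h3)).
by exists x; have [h1 h2] := proj2 (@ball_inf x M) Bx; split.
Qed.

End Gen.

Section Inst.
Variable R : realType.

Lemma ncompl_R (u : nat -> R) :
  (forall e, 0 < e -> exists N, forall n m, (N <= n)%N -> (N <= m)%N ->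
     `|u n - u m| <= e) ->
  forall e, 0 < e -> exists N, forall n, (N <= n)%N -> `|u n - limn u| <= e.
Proof.
move=> hc e e0.
have hcv : cvgn u.
  apply: cauchy_cvg; apply: cauchy_exP => eps eps0.
  have [N hN] := hc _ (divr_gt0 eps0 (ltr0n _ 2)).
  exists (u N); exists N => // n /= hn.
  rewrite /ball /= (le_lt_trans (hN _ _ (leqnn N) hn)) //.
  by rewrite ltr_pdivrMr // ltr_pMr // ltr1n.
move/cvgrPdist_le: hcv => /(_ e e0) [N _ hN].
by exists N => n hn; rewrite distrC; apply: hN.
Qed.

Lemma ncpt_R (T : Type) (U : set_system T) : UltraFilter U ->
  forall (f : T -> R) (M : R), U [set t | `|f t| <= M] ->
  exists L, forall e, 0 < e -> U [set t | `|f t - L| < e].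
Proof.
move=> UU f M hM.
have cpt := @segment_compact R (- M) M.
have FA : (f @ U) `[- M, M]%classic.
  suff : U (f @^-1` `[- M, M]%classic) by [].
  by apply: filterS hM => t /= h; rewrite in_itv /= -ler_norml.
have [L [_ clL]] := cpt (f @ U) (fmap_proper_filter f ultra_proper) FA.
exists L => e e0.
case: (in_ultra_setVsetC [set t | `|f t - L| < e] UU) => // hc.
exfalso.
have hA : (f @ U) [set y | ~ (`|y - L| < e)].
  suff : U (f @^-1` [set y | ~ (`|y - L| < e)]) by [].
  exact: hc.
have [y [/= hy1 hy2]] := clL _ _ hA (nbhsx_ballx L e e0).
by apply: hy1; rewrite distrC.
Qed.

Import ComplexField.Normc.

Lemma Re_sub (z w : R[i]) : complex.Re (z - w) = complex.Re z - complex.Re w.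
Proof. by case: z w => [a b] [c d]. Qed.

Lemma Im_sub (z w : R[i]) : complex.Im (z - w) = complex.Im z - complex.Im w.
Proof. by case: z w => [a b] [c d]. Qed.

Lemma normc_ge0 (z : R[i]) : 0 <= normc z.
Proof. by case: z => a b; exact: sqrtr_ge0. Qed.

Lemma Re_le (z : R[i]) : `|complex.Re z| <= normc z.
Proof.
case: z => a b /=; rewrite -sqrtr_sqr ler_sqrt ?lerDl ?sqr_ge0 //.
by rewrite addr_ge0 ?sqr_ge0.
Qed.

Lemma Im_le (z : R[i]) : `|complex.Im z| <= normc z.
Proof.
case: z => a b /=; rewrite -sqrtr_sqr ler_sqrt ?lerDr ?sqr_ge0 //.
by rewrite addr_ge0 ?sqr_ge0.
Qed.

Lemma normc_le (z : R[i]) : normc z <= `|complex.Re z| + `|complex.Im z|.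
Proof.
case: z => a b /=.
have h0 : 0 <= `|a| + `|b| by rewrite addr_ge0.
have e1 : `|a| ^+ 2 = a ^+ 2 by rewrite -normrX ger0_norm // sqr_ge0.
have e2 : `|b| ^+ 2 = b ^+ 2 by rewrite -normrX ger0_norm // sqr_ge0.
have h : a ^+ 2 + b ^+ 2 <= (`|a| + `|b|) ^+ 2.
  rewrite sqrrD e1 e2 mulr2n.
  have := mulr_ge0 (normr_ge0 a) (normr_ge0 b); lra.
rewrite -[X in _ <= X](ger0_norm h0) -(sqrtr_sqr (`|a| + `|b|)).
by rewrite ler_sqrt // sqr_ge0.
Qed.

Lemma normCE (z : R[i]) : `|z| = ((normc z)%:C)%C.
Proof. by case: z. Qed.

Lemma ncompl_C (u : nat -> Num.NumField.sort R[i]) :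
  (forall e, 0 < e -> exists N, forall n m, (N <= n)%N -> (N <= m)%N ->
     normc (u n - u m) <= e) ->
  forall e, 0 < e -> exists N, forall n, (N <= n)%N -> normc (u n - limn u) <= e.
Proof.
move=> hc.
have hRe : forall e, 0 < e -> exists N, forall n m, (N <= n)%N -> (N <= m)%N ->
    `|complex.Re (u n) - complex.Re (u m)| <= e.
  move=> e e0; have [N hN] := hc e e0; exists N => n m hn hm.
  by rewrite -Re_sub (le_trans (Re_le _)) // hN.
have hIm : forall e, 0 < e -> exists N, forall n m, (N <= n)%N -> (N <= m)%N ->
    `|complex.Im (u n) - complex.Im (u m)| <= e.
  move=> e e0; have [N hN] := hc e e0; exists N => n m hn hm.
  by rewrite -Im_sub (le_trans (Im_le _)) // hN.
have cRe := ncompl_R hRe; have cIm := ncompl_R hIm.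
set A := limn (fun n => complex.Re (u n)) in cRe.
set B := limn (fun n => complex.Im (u n)) in cIm.
pose L : Num.NumField.sort R[i] := (A +i* B)%C.
have hb : forall e, 0 < e -> exists N, forall n, (N <= n)%N ->
    normc (u n - L) <= e.
  move=> e e0; have e20 : 0 < e / 2 by rewrite divr_gt0.
  have [N1 h1] := cRe _ e20; have [N2 h2] := cIm _ e20.
  exists (maxn N1 N2) => n hn.
  rewrite (le_trans (normc_le _)) // Re_sub Im_sub /= (splitr e) lerD //.
    by apply: h1; rewrite (leq_trans _ hn) ?leq_maxl.
  by apply: h2; rewrite (leq_trans _ hn) ?leq_maxr.
have hcv : u n @[n --> \oo] --> L.
  apply/cvgrPdist_lt => eps eps0.
  move: eps0; rewrite ltcE => /andP [/eqP hIm0 hRe0].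
  have [N hN] := hb _ (divr_gt0 hRe0 (ltr0n _ 2)).
  exists N => // n /= hn.
  rewrite normCE ltcE /= hIm0 eqxx /= -normcN opprB.
  apply: le_lt_trans (hN _ hn) _.
  by rewrite ltr_pdivrMr // ltr_pMr // ltr1n.
have -> : limn u = L by apply: cvg_lim => //; exact: norm_hausdorff.
exact: hb.
Qed.

Lemma ncpt_C (T : Type) (U : set_system T) : UltraFilter U ->
  forall (f : T -> R[i]) (M : R), U [set t | normc (f t) <= M] ->
  exists L, nconv (@normc R) U f L.
Proof.
move=> UU f M hM.
have [A hA] : exists A, forall e, 0 < e ->
    U [set t | `|complex.Re (f t) - A| < e].
  apply: (ncpt_R UU (M := M)); apply: filterS hM => t /=.
  exact: le_trans (Re_le _).
have [B hB] : exists B, forall e, 0 < e ->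
    U [set t | `|complex.Im (f t) - B| < e].
  apply: (ncpt_R UU (M := M)); apply: filterS hM => t /=.
  exact: le_trans (Im_le _).
exists (A +i* B)%C => e e0; have e20 : 0 < e / 2 by rewrite divr_gt0.
apply: filterS (filterI (hA _ e20) (hB _ e20)) => t [/= h1 h2].
rewrite (le_lt_trans (normc_le _)) // Re_sub Im_sub /= (splitr e) ltrD //.
Qed.

End Inst.

Theorem theorem3 (R : realType) :
  compactness_statement (K := R) (fun x : R => `|x|) /\
  compactness_statement (K := R[i]) (fun z : R[i] => ComplexField.Normc.normc z).
Proof.
split.
  apply: gen_stmt.
  - exact: normr_ge0.
  - by move=> x /normr0_eq0.
  - exact: ler_normD.
  - exact: normrM.
  - exact: normrN.
  - exact: normr0.
  - exact: normr1.
  - exact: ncompl_R.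
  - move=> T U UU f M hM; have [L hL] := ncpt_R UU hM; exists L; exact: hL.
apply: gen_stmt.
- exact: normc_ge0.
- exact: ComplexField.Normc.eq0_normc.
- exact: (@le_normcD R).
- exact: ComplexField.Normc.normcM.
- exact: (@normcN R).
- exact: ComplexField.Normc.normc0.
- exact: ComplexField.Normc.normc1.
- exact: ncompl_C.
- exact: ncpt_C.
Qed.
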